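(* Let $0<q<1$. Define the $q$-Genocchi numbers $g_{n,q}$ and $q$-Genocchi polynomials $G_{n,q}(x)$ by \[ \frac{2t}{e_q(t)+1}=\sum_{n=0}^\infty g_{n,q}\frac{t^n}{[n]_q!},\qquad \frac{2t}{e_q(t)+1}e_q(tx)=\sum_{n=0}^\infty G_{n,q}(x)\frac{t^n}{[n]_q!}. \] Then for every positive integer $n$, $G_{n,q}(x)$ satisfies the $q$-difference equation \[ \sum_{k=2}^{n}\frac{q^{n-k-1}g_{k,q}}{2[k]_q!}D_{q,x}^kG_{n,q}(x)-\frac{q^{n-2}}{2}D_{q,x}G_{n,q}(x)+q^{n-1}G_{n,q}(x)+xq^nD_{q,x}G_{n,q}(x)-[n]_qG_{n,q}(qx)=0, \] i.e. \[ \frac{1}{2q}\frac{g_{n,q}}{[n]_q!}D_{q,x}^nG_{n,q}(x)+\frac{g_{n-1,q}}{2[n-1]_q!}D_{q,x}^{n-1}G_{n,q}(x)+\dots+\frac{q^{n-3}g_{2,q}}{2[2]_q!}D_{q,x}^2G_{n,q}(x)-\frac{q^{n-2}}{2}D_{q,x}G_{n,q}(x)+q^{n-1}G_{n,q}(x)+xq^nD_{q,x}G_{n,q}(x)-[n]_qG_{n,q}(qx)=0. \]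
   Context: $[n]_q=\frac{1-q^n}{1-q}$, $[0]_q!=1$, $[n]_q!=[n]_q\cdots[1]_q$, $e_q(t)=\sum_{n\ge0}\frac{t^n}{[n]_q!}$. The $q$-derivative is $D_{q,x}f(x)=\frac{f(qx)-f(x)}{(q-1)x}$ (on polynomials $D_{q,x}x^n=[n]_qx^{n-1}$), and $D_{q,x}^k$ is its $k$-fold iterate. *)

(* Defs.v *)
From HB Require Import structures.
From mathcomp Require Import all_boot all_order all_algebra.
Set Implicit Arguments. Unset Strict Implicit. Unset Printing Implicit Defensive.
Import Order.TTheory GRing.Theory Num.Theory.
Local Open Scope ring_scope.

Section QDefs.
Variable R : realFieldType.

Definition qint (q : R) (n : nat) : R := (1 - q ^+ n) / (1 - q).

Definition qfact (q : R) (n : nat) : R := \prod_(i < n) qint q i.+1.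

(* coefficient of t^m in e_q(t) + 1 *)
Definition eq1coef (q : R) (m : nat) : R := (qfact q m)^-1 + (m == 0%N)%:R.

Definition qderiv (q : R) (p : {poly R}) : {poly R} :=
  \poly_(i < (size p).-1) (qint q i.+1 * p`_i.+1).

Definition qderivn (q : R) (k : nat) (p : {poly R}) : {poly R} :=
  iter k (qderiv q) p.

End QDefs.

(* Main.v *)
Require Import Defs.
From HB Require Import structures.
From mathcomp Require Import all_boot all_order all_algebra.
From mathcomp Require Import ring lra zify.
Import Order.TTheory GRing.Theory Num.Theory.
Local Open Scope ring_scope.
Set Implicit Arguments. Unset Strict Implicit.

Section Aux.
Variable R : realFieldType.
Implicit Types (f h : nat -> R).

Definition conv f h (m : nat) : R := \sum_(k < m.+1) f k * h (m - k)%N.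

Definition Pt f (N : nat) : {poly R} := \poly_(i < N) f i.

Lemma convP f h N m : (m < N)%N -> (Pt f N * Pt h N)`_m = conv f h m.
Proof.
move=> mN; rewrite coefM /conv; apply: eq_bigr => k _.
have kN : (k < N)%N by have := ltn_ord k; lia.
have kN' : (m - k < N)%N by lia.
by rewrite !coef_poly kN kN'.
Qed.

Lemma conv_assoc f h w m : conv (conv f h) w m = conv f (conv h w) m.
Proof.
have -> : conv (conv f h) w m = ((Pt f m.+1 * Pt h m.+1) * Pt w m.+1)`_m.
  rewrite coefM /conv; apply: eq_bigr => k _.
  have km : (k < m.+1)%N by [].
  rewrite convP //; congr (_ * _); rewrite coef_poly; by have -> : (m - k < m.+1)%N by lia.
rewrite -mulrA coefM /conv; apply: eq_bigr => k _.
have km : (k < m.+1)%N by [].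
rewrite convP; last by lia.
by rewrite coef_poly km.
Qed.

Lemma sum_ord_delta (N j : nat) f :
  \sum_(i < N) f i * (j == i)%:R = if (j < N)%N then f j else 0.
Proof.
case: ifP => Hj.
  rewrite (bigD1 (Ordinal Hj)) //= eqxx mulr1 big1 ?addr0 // => i Hi.
  rewrite (_ : (j == i) = false) ?mulr0 //; apply/eqP => E; move/eqP: Hi; apply; exact: val_inj.
rewrite big1 // => i _; case: eqP => [Eji|]; last by rewrite mulr0.
by move: Hj; rewrite Eji ltn_ord.
Qed.

Lemma conv_inv f u : u 0%N = 2 -> (forall m, conv f u m = 0) -> forall m, f m = 0.
Proof.
move=> u0 H m; elim: m {-2}m (leqnn m) => [|m IH] k km.
  have : conv f u 0 = 0 by [].
  move: km; rewrite leqn0 => /eqP ->.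
  rewrite /conv big_ord1 subnn u0 => /eqP; rewrite mulf_eq0 pnatr_eq0 orbF => /eqP //.
case: (ltnP k m.+1) => hk; first by apply: IH.
have -> : k = m.+1 by lia.
have := H m.+1; rewrite /conv big_ord_recr /= subnn u0 big1.
  by rewrite add0r => /eqP; rewrite mulf_eq0 pnatr_eq0 orbF => /eqP.
move=> i _; rewrite IH ?mul0r //; have := ltn_ord i; lia.
Qed.

End Aux.
Lemma coef_qderiv (R : realFieldType) (q : R) p i : (qderiv q p)`_i = qint q i.+1 * p`_i.+1.
Proof.
rewrite /qderiv coef_poly; case: ifP => // hi.
rewrite nth_default ?mulr0 //; move: hi; case: (size p) => //= s; lia.
Qed.

Section Q.
Variable R : realFieldType.
Variable q : R.
Hypothesis hq0 : 0 < q.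
Hypothesis hq1 : q < 1.

Lemma q_neq0 : q != 0. Proof. by rewrite gt_eqF. Qed.
Lemma omq_neq0 : 1 - q != 0. Proof. by rewrite subr_eq0 eq_sym lt_eqF. Qed.

Lemma qint_neq0 n : qint q n.+1 != 0.
Proof.
rewrite /qint mulf_neq0 ?invr_eq0 ?omq_neq0 // subr_eq0 eq_sym lt_eqF //.
by rewrite exprn_ilt1 ?ltW.
Qed.

Lemma qfact_neq0 n : qfact q n != 0.
Proof. by apply/prodf_neq0 => i _; apply: qint_neq0. Qed.

Lemma qint0 : qint q 0 = 0.
Proof. by rewrite /qint expr0 subrr mul0r. Qed.

Lemma qint1 : qint q 1 = 1.
Proof. by rewrite /qint expr1 divff // omq_neq0. Qed.

Lemma qintD k l : qint q (k + l) = qint q l + q ^+ l * qint q k.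
Proof.
rewrite /qint exprD; have := omq_neq0 => h; field => //.
Qed.

Lemma qfactS n : qfact q n.+1 = qfact q n * qint q n.+1.
Proof. by rewrite /qfact big_ord_recr. Qed.

Lemma qfact0 : qfact q 0 = 1.
Proof. by rewrite /qfact big_ord0. Qed.


Lemma coef_qderivn k p j :
  (qderivn q k p)`_j = qfact q (j + k) / qfact q j * p`_(j + k).
Proof.
elim: k j => [|k IH] j.
  by rewrite addn0 divff ?mul1r // qfact_neq0.
rewrite /qderivn /= -/(qderivn q k p) coef_qderiv IH addSnnS qfactS.
have := qfact_neq0 j; have := qint_neq0 j => h1 h2; by field; rewrite h1 h2.
Qed.

Lemma coef_comp_scale p j : (p \Po (q *: 'X))`_j = q ^+ j * p`_j.
Proof.
rewrite coef_comp_poly.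
under eq_bigr => i _ do rewrite exprZn coefZ coefXn mulrA.
rewrite (@sum_ord_delta _ _ _ (fun i => p`_i * q ^+ i)) mulrC; case: ifP => // hj.
by rewrite nth_default ?mulr0 // leqNgt hj.
Qed.

End Q.
Section Series.
Variable R : realFieldType.
Variable q : R.
Hypothesis hq0 : 0 < q.
Hypothesis hq1 : q < 1.
Variable g : nat -> R.
Hypothesis H1 : forall n : nat,
  \sum_(k < n.+1) (g k / qfact q k) * eq1coef q (n - k) = (n == 1%N)%:R * 2.

Let a k := g k / qfact q k.
Let u k := eq1coef q k.
Let h k := a k / q ^+ k.
Definition Xs m := conv h a m / 2 - a m.-1 / q + a m - q * qint q m * h m.

Lemma u0 : u 0 = 2.
Proof. by rewrite /u /eq1coef qfact0 invr1. Qed.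

Lemma Hc m : conv a u m = (m == 1%N)%:R * 2.
Proof. exact: H1. Qed.

Lemma a0 : a 0 = 0.
Proof.
have := Hc 0; rewrite /conv big_ord1 subnn u0 mul0r => /eqP.
by rewrite mulf_eq0 pnatr_eq0 orbF => /eqP.
Qed.

Lemma a1 : a 1 = 1.
Proof.
have := Hc 1; rewrite /conv big_ord_recr big_ord1 /= subnn u0 a0 mul0r add0r mul1r.
move=> E; lra.
Qed.

Lemma qint_u l : qint q l.+1 * u l.+1 = u l - (l == 0%N)%:R.
Proof.
rewrite /u /eq1coef /= addr0 addrK qfactS.
have := qfact_neq0 hq0 hq1 l; have := qint_neq0 hq0 hq1 l => h1 h2.
by field; rewrite h1 h2.
Qed.

Lemma sum_last_delta (f : nat -> R) p :
  \sum_(k < p.+1) f k * ((p - k)%N == 0%N)%:R = f p.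
Proof.
rewrite big_ord_recr /= subnn eqxx mulr1 big1 ?add0r // => i _.
have := ltn_ord i => hi; rewrite (_ : (p - i == 0)%N = false) ?mulr0 //; lia.
Qed.

Lemma termw k l (x w : R) :
  q ^+ (k + l) * (qint q k * (x / q ^+ k) * w)
  = qint q (k + l) * (x * w) - x * (qint q l * w).
Proof.
rewrite (qintD hq1) exprD; have hk : q ^+ k != 0 by rewrite expf_neq0 // q_neq0.
by field.
Qed.

Lemma KeyD p :
  q ^+ p.+1 * conv (fun k => qint q k * h k) u p.+1
  = (p == 0%N)%:R * 2 - (p == 1%N)%:R * 2 + a p.
Proof.
rewrite /conv mulr_sumr.
have -> : \sum_(k < p.+2) q ^+ p.+1 * (qint q k * h k * u (p.+1 - k))
  = \sum_(k < p.+2) (qint q p.+1 * (a k * u (p.+1 - k))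
                     - a k * (qint q (p.+1 - k) * u (p.+1 - k))).
  apply: eq_bigr => -[k hk0] _ /=; have hk : (k <= p.+1)%N by [].
  move: (p.+1 - k)%N (subnKC hk) => l El; rewrite -El; exact: termw.
rewrite sumrB -mulr_sumr -/(conv a u p.+1) Hc big_ord_recr /= subnn qint0 !mul0r mulr0 addr0.
have -> : \sum_(i < p.+1) a i * (qint q (p.+1 - i) * u (p.+1 - i))
    = \sum_(i < p.+1) (a i * u (p - i) - a i * ((p - i)%N == 0%N)%:R).
  apply: eq_bigr => i _; have hi : (i <= p)%N by have := ltn_ord i.
  by rewrite subSn // qint_u mulrBr.
rewrite sumrB sum_last_delta -/(conv a u p) Hc.
case: p => [|p]; first by rewrite (qint1 hq1) /=; ring.
by rewrite /=; ring.
Qed.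

Lemma convX m : conv Xs u m = 0.
Proof.
have -> : conv Xs u m = conv (conv h a) u m / 2 - conv (fun k => a k.-1) u m / q
   + conv a u m - q * conv (fun k => qint q k * h k) u m.
  rewrite /conv !mulr_suml mulr_sumr -!sumrN -!big_split /=.
  by apply: eq_bigr => k _; rewrite /Xs /conv; ring.
case: m => [|p].
  rewrite /conv !big_ord1 /= qint0 a0 !subnn; ring.
rewrite conv_assoc.
have -> : conv h (conv a u) p.+1 = h p * 2.
  rewrite [conv h _ _]/conv big_ord_recr /= subnn Hc /= mul0r mulr0 addr0.
  rewrite -(sum_last_delta (fun k => h k * 2)); apply: eq_bigr => i _.
  have hi : (i <= p)%N by have := ltn_ord i.
  rewrite Hc subSn //= eqSS; ring.
have -> : conv (fun k => a k.-1) u p.+1 = conv a u p.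
  by rewrite /conv big_ord_recl /= a0 mul0r add0r; apply: eq_bigr => i _; rewrite subSS.
have E := KeyD p.
have hp : q ^+ p.+1 != 0 by rewrite expf_neq0 // q_neq0.
have -> : conv (fun k => qint q k * h k) u p.+1
    = ((p == 0%N)%:R * 2 - (p == 1%N)%:R * 2 + a p) / q ^+ p.+1.
  by rewrite -E mulrC mulKf.
rewrite !Hc /h; have := q_neq0 hq0 => hq.
case: p hp E => [|[|p]] hp E /=; rewrite ?expr1 ?expr0 ?exprS; field.
all: by rewrite ?hq ?andbT ?(expf_neq0 _ hq).
Qed.

Lemma Xs0 m : Xs m = 0.
Proof. exact: (conv_inv u0 convX). Qed.

End Series.
Lemma coef_XD (R : realFieldType) (q : R) (p : {poly R}) j :
  ('X * qderiv q p)`_j = qint q j * p`_j.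
Proof.
rewrite coefXM; case: j => [|j] /=.
  by rewrite /qint expr0 subrr !mul0r.
by rewrite coef_qderiv.
Qed.

Lemma expz_a (R : realFieldType) (q : R) n k : q != 0 -> (0 < n)%N ->
  q ^ (n%:Z - k%:Z - 1) = q ^+ n.-1 / q ^+ k.
Proof.
move=> hq hn.
have -> : (n%:Z - k%:Z - 1 = (n.-1)%:Z + - (k%:Z))%R by lia.
by rewrite expfzDr // -exprnN.
Qed.

Lemma expz_b (R : realFieldType) (q : R) n : q != 0 -> (0 < n)%N ->
  q ^ (n%:Z - 2) = q ^+ n.-1 / q.
Proof.
move=> hq hn; have := (@expz_a _ q n 1 hq hn); rewrite expr1 => <-; congr (_ ^ _); lia.
Qed.

Unset Implicit Arguments.
Unset Strict Implicit.

Theorem theorem8 (R : realFieldType) (q : R) (g : nat -> R) (G : nat -> {poly R}) :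
  0 < q -> q < 1 ->
  (forall n : nat,
      \sum_(k < n.+1) (g k / qfact q k) * eq1coef q (n - k) = (n == 1%N)%:R * 2) ->
  (forall n : nat,
      (qfact q n)^-1 *: G n
      = \sum_(k < n.+1) (g k / qfact q k / qfact q (n - k)) *: 'X^(n - k)) ->
  forall n : nat, (0 < n)%N ->
    \sum_(2 <= k < n.+1)
        ((q ^ (n%:Z - k%:Z - 1) * g k) / (2 * qfact q k)) *: qderivn q k (G n)
    - (q ^ (n%:Z - 2) / 2) *: qderiv q (G n)
    + q ^+ n.-1 *: G n
    + q ^+ n *: ('X * qderiv q (G n))
    - qint q n *: (G n \Po (q *: 'X))
    = 0.
Proof.
move=> hq0 hq1 H1 H2 n n0.
have hq : q != 0 by rewrite gt_eqF.
pose a k := g k / qfact q k.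
have Gc : forall i : nat, (G n)`_i = qfact q n * (if (i <= n)%N then a (n - i)%N / qfact q i else 0).
  move=> i.
  have -> : G n = qfact q n *: ((qfact q n)^-1 *: G n).
    by rewrite scalerA divff ?scale1r // qfact_neq0.
  rewrite H2 coefZ coef_sum; congr (_ * _).
  under eq_bigr => k _ do rewrite coefZ coefXn.
  rewrite (reindex_inj rev_ord_inj) /=.
  have -> : \sum_(j < n.+1) g (n.+1 - j.+1)%N / qfact q (n.+1 - j.+1) /
     qfact q (n - (n.+1 - j.+1)) * (i == (n - (n.+1 - j.+1))%N)%:R
     = \sum_(j < n.+1) (a (n - j)%N / qfact q j) * (i == j)%:R.
    apply: eq_bigr => j _; have hj : (j <= n)%N by have := ltn_ord j.
    by rewrite subSS subKn.
  by rewrite (@sum_ord_delta _ _ _ (fun j => a (n - j)%N / qfact q j)).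
have Gk : forall k j : nat, (qderivn q k (G n))`_j
    = if (j + k <= n)%N then qfact q n / qfact q j * a (n - (j + k))%N else 0.
  move=> k j; rewrite coef_qderivn // Gc; case: ifP => _; last by rewrite !mulr0.
  have := qfact_neq0 hq0 hq1 j; have := qfact_neq0 hq0 hq1 (j + k) => h1 h2.
  by field; rewrite h1 h2.
apply/polyP => j.
rewrite coef0 !(coefB, coefD) coef_sum !coefZ coef_XD coef_comp_scale.
rewrite -[qderiv q (G n)]/(qderivn q 1 (G n)) -[(G n)`_j]/((qderivn q 0 (G n))`_j).
under eq_bigr => k _ do rewrite coefZ Gk.
rewrite !Gk.
case: (leqP j n) => hjn; last first.
  have F : forall k, (j + k <= n)%N = false by move=> k; lia.
  under eq_bigr => k _ do rewrite F.
  rewrite !F big1 => [|k _]; last by rewrite mulr0.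
  by rewrite !mulr0 !(subr0, addr0).
pose m := (n - j)%N.
pose K := qfact q n / qfact q j.
have a0' : a 0%N = 0 by exact: (a0 H1).
have a1' : a 1%N = 1 by exact: (a1 H1).
have Gk' : forall k, (if (j + k <= n)%N then K * a (n - (j + k))%N else 0) = K * a (m - k)%N.
  move=> k; case: ifP => hk.
    by rewrite (_ : (n - (j + k) = m - k)%N) //; rewrite /m; lia.
  by rewrite (_ : (m - k = 0)%N) ?a0' ?mulr0 //; rewrite /m; lia.
under eq_bigr => k _ do rewrite Gk'.
rewrite !Gk' subn0 subn1 (expz_b hq n0).
set P := q ^+ n.-1.
have Hs : \sum_(2 <= i < n.+1) q ^ (n%:Z - i%:Z - 1) * g i / (2 * qfact q i) * (K * a (m - i)%N)
   = K * P / 2 * (conv (fun k => a k / q ^+ k) a m - a m.-1 / q).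
  under eq_bigr => i _ do rewrite (expz_a _ hq n0).
  have -> : \sum_(2 <= i < n.+1) P / q ^+ i * g i / (2 * qfact q i) * (K * a (m - i)%N)
      = \sum_(2 <= i < n.+1) K * P / 2 * (a i / q ^+ i * a (m - i)%N).
    apply: eq_bigr => i _; rewrite /a.
    have := qfact_neq0 hq0 hq1 i; have : q ^+ i != 0 by rewrite expf_neq0.
    have := qfact_neq0 hq0 hq1 (m - i) => h3 h1 h2; field; by rewrite h1 h2 h3.
  rewrite -mulr_sumr; congr (_ * _).
  pose F i := a i / q ^+ i * a (m - i)%N.
  have hmn : (m.+1 <= n.+1)%N by rewrite /m; lia.
  have E1 : \sum_(0 <= i < n.+1) F i = \sum_(i < m.+1) F i.
    rewrite (big_cat_nat (leq0n _) hmn) /= big_mkord [X in _ + X]big1_seq ?addr0 //.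
    move=> i /andP [_]; rewrite mem_index_iota => /andP [hi _].
    by rewrite /F (_ : (m - i = 0)%N) ?a0' ?mulr0 //; lia.
  rewrite /conv -/F -E1.
  have h1n : (1 < n.+1)%N by lia.
  rewrite (@big_ltn _ _ _ 0 n.+1) // (@big_ltn _ _ _ 1 n.+1) // /F a0' a1' expr1 subn1 subn0.
  by rewrite !mul0r add0r mul1r; ring.
rewrite Hs.
have X : conv (fun k => a k / q ^+ k) a m / 2 - a m.-1 / q + a m
   - q * qint q m * (a m / q ^+ m) = 0 := Xs0 hq0 hq1 H1 m.
have En : n = (j + m)%N by rewrite /m; lia.
have EP : q ^+ n = P * q by rewrite /P -{1}(prednK n0) exprS mulrC.
have hm : q ^+ m != 0 by rewrite expf_neq0.
have Eq : q ^+ j = P * q / q ^+ m.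
  by rewrite -EP En exprD mulfK.
rewrite EP Eq.
have -> : qint q n = qint q m + q ^+ m * qint q j by rewrite En (qintD hq1).
rewrite -(mulr0 (K * P)) -X.
by field; rewrite hm hq.
Qed.
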